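(* Let $n\ge 3$. For every $A\subseteq[n]$, the operator $\Gamma_A$ belongs to the unital associative algebra (over $\mathbb{R}$) generated by the operators $\Gamma_B$ with $B\subseteq[n]$, $|B|=2$; i.e. each $\Gamma_A$ is a polynomial (with real coefficients depending on $\mu_1,\dots,\mu_n$) in the $\Gamma_{\{i,j\}}$, $1\le i<j\le n$.
   Context: Fix $n\ge1$ and real parameters $\mu_1,\dots,\mu_n>0$; write $[n]=\{1,\dots,n\}$. For $i\in[n]$, $r_i$ is the reflection $(r_if)(x)=f(x_1,\dots,-x_i,\dots,x_n)$ and $T_i=\partial_{x_i}+\frac{\mu_i}{x_i}(1-r_i)$. $\mathcal{C}\ell_n$ is generated by $e_1,\dots,e_n$ with $e_ie_j+e_je_i=-2\delta_{ij}$, $V$ is a fixed left $\mathcal{C}\ell_n$-module, and operators act on $\mathcal{P}(\mathbb{R}^n)\otimes V$ with $x_i,T_i,r_i$ acting on the polynomial factor and $e_i$ on $V$. For $A\subseteq[n]$: $\underline{D}_A=\sum_{i\in A}e_iT_i$, $\underline{x}_A=\sum_{i\in A}e_ix_i$, $\underline{S}_A=\frac12([\underline{x}_A,\underline{D}_A]-1)$, $\Gamma_A=\underline{S}_A\prod_{i\in A}r_i$ (empty sums $0$, empty products $1$). *)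

(* Defs.v *)
From HB Require Import structures.
From mathcomp Require Import all_boot all_order all_algebra.
Set Implicit Arguments. Unset Strict Implicit. Unset Printing Implicit Defensive.
Import Order.TTheory GRing.Theory Num.Theory.
Local Open Scope ring_scope.

(* Model of P(R^n) (x) V: an element is a coefficient map from multi-indices
   (exponent vectors alpha, standing for the monomial x^alpha) to V.
   Genuine polynomials are those with finite support (is_poly).
   All operators below act coefficientwise; they are the operators of the
   paper transported to the monomial basis. *)
Definition mon (n : nat) := {ffun 'I_n -> nat}.

Definition incm n (i : 'I_n) (a : mon n) : mon n := [ffun j => (a j + (j == i))%N].
Definition decm n (i : 'I_n) (a : mon n) : mon n := [ffun j => (a j - (j == i))%N].

Section Ops.
Variables (R : realFieldType) (n : nat) (V : lmodType R).

Definition PV := mon n -> V.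
Definition Op := PV -> PV.

Definition is_poly (f : PV) : Prop :=
  exists d : nat, forall a : mon n, (d < \sum_(i < n) a i)%N -> f a = 0.

Definition opzero : Op := fun _ _ => 0.
Definition opid : Op := fun f => f.
Definition opadd (P Q : Op) : Op := fun f a => P f a + Q f a.
Definition opscale (c : R) (P : Op) : Op := fun f a => c *: P f a.
Definition opcomp (P Q : Op) : Op := fun f => P (Q f).

(* multiplication by x_i : x^beta |-> x^(beta + e_i) *)
Definition xop (i : 'I_n) : Op :=
  fun f a => if (0 < a i)%N then f (decm i a) else 0.
Definition rop (i : 'I_n) : Op := fun f a => ((-1) ^+ (a i)) *: f a.
(* Dunkl operator T_i = d/dx_i + mu_i/x_i (1 - r_i):
   x^beta |-> (beta_i + mu_i (1 - (-1)^(beta_i))) x^(beta - e_i),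
   (the coefficient vanishes when beta_i = 0). *)
Definition Top (mu : 'I_n -> R) (i : 'I_n) : Op :=
  fun f a => ((a i).+1%:R + mu i * (1 - (-1) ^+ (a i).+1)) *: f (incm i a).
Definition eop (e : 'I_n -> V -> V) (i : 'I_n) : Op := fun f a => e i (f a).

Definition DA e mu (A : {set 'I_n}) : Op :=
  \big[opadd/opzero]_(i in A) opcomp (eop e i) (Top mu i).
Definition XA e (A : {set 'I_n}) : Op :=
  \big[opadd/opzero]_(i in A) opcomp (eop e i) (xop i).
Definition SA e mu (A : {set 'I_n}) : Op :=
  opscale (2^-1)
    (opadd (opadd (opcomp (XA e A) (DA e mu A))
                  (opscale (-1) (opcomp (DA e mu A) (XA e A))))
           (opscale (-1) opid)).
Definition GammaA e mu (A : {set 'I_n}) : Op :=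
  opcomp (SA e mu A) (\big[opcomp/opid]_(i in A) rop i).

Inductive op_alg (G : Op -> Prop) : Op -> Prop :=
| alg_gen P : G P -> op_alg G P
| alg_id : op_alg G opid
| alg_add P Q : op_alg G P -> op_alg G Q -> op_alg G (opadd P Q)
| alg_scale c P : op_alg G P -> op_alg G (opscale c P)
| alg_comp P Q : op_alg G P -> op_alg G Q -> op_alg G (opcomp P Q).

End Ops.

(* Main.v *)
Require Import Defs.
From HB Require Import structures.
From mathcomp Require Import all_boot all_order all_algebra.
From mathcomp Require Import boolp.
From mathcomp Require Import ring.
Set Implicit Arguments. Unset Strict Implicit. Unset Printing Implicit Defensive.
Import Order.TTheory GRing.Theory Num.Theory.
Local Open Scope ring_scope.

Definition linop (R : realFieldType) (n : nat) (V : lmodType R) (P : Op n V) :=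
  forall (c : R) (f g : PV n V),
    P (fun a => c *: f a + g a) = (fun a => c *: P f a + P g a).

Record Lin (R : realFieldType) (n : nat) (V : lmodType R) :=
  MkLin { lf : Op n V; lfP : linop lf }.
Arguments Lin : clear implicits.
Arguments MkLin {R n V}.

HB.instance Definition _ (R : realFieldType) (n : nat) (V : lmodType R) := gen_eqMixin (Lin R n V).
HB.instance Definition _ (R : realFieldType) (n : nat) (V : lmodType R) := gen_choiceMixin (Lin R n V).

Section LinRing.
Variables (R : realFieldType) (n : nat) (V : lmodType R).
Local Notation L := (Lin R n V).

Lemma linE (P Q : L) : (forall f a, lf P f a = lf Q f a) -> P = Q.
Proof.
case: P => P HP; case: Q => Q HQ /= H.
have E : P = Q by apply: funext => f; apply: funext => a; exact: H.
subst Q; congr MkLin; exact: Prop_irrelevance.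
Qed.

Lemma lin0 (P : L) : lf P (fun _ => 0) = (fun _ => 0).
Proof.
have H := lfP P 1 (fun _ => 0) (fun _ => 0).
have E : (fun _ : mon n => 1 *: (0:V) + 0) = (fun _ => 0).
  by apply: funext => a; rewrite scaler0 addr0.
rewrite E in H; apply: funext => a.
have := congr1 (fun h => h a) H => /=; rewrite scale1r => h.
by apply: (@addrI _ (lf P (fun _ => 0) a)); rewrite addr0 -h.
Qed.

Lemma linD (P : L) (f g : PV n V) :
  lf P (fun a => f a + g a) = (fun a => lf P f a + lf P g a).
Proof.
have -> : (fun a => f a + g a) = (fun a => 1 *: f a + g a).
  by apply: funext => a; rewrite scale1r.
rewrite lfP; apply: funext => a; by rewrite scale1r.
Qed.

Lemma linZ (P : L) (c : R) (f : PV n V) :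
  lf P (fun a => c *: f a) = (fun a => c *: lf P f a).
Proof.
have -> : (fun a => c *: f a) = (fun a => c *: f a + (fun _ => 0) a).
  by apply: funext => a; rewrite addr0.
by rewrite lfP lin0; apply: funext => a; rewrite addr0.
Qed.


Lemma linop0 : linop (@opzero R n V).
Proof. by move=> c f g; apply: funext => a; rewrite /opzero scaler0 addr0. Qed.
Lemma linop_id : linop (@opid R n V).
Proof. by []. Qed.
Lemma linop_add (P Q : Op n V) : linop P -> linop Q -> linop (opadd P Q).
Proof.
move=> HP HQ c f g; apply: funext => a; rewrite /opadd HP HQ.
by rewrite scalerDr addrACA.
Qed.
Lemma linop_scale (d : R) (P : Op n V) : linop P -> linop (opscale d P).
Proof.
move=> HP c f g; apply: funext => a; rewrite /opscale HP.
by rewrite scalerDr !scalerA mulrC.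
Qed.
Lemma linop_comp (P Q : Op n V) : linop P -> linop Q -> linop (opcomp P Q).
Proof. by move=> HP HQ c f g; rewrite /opcomp HQ HP. Qed.

Definition lzero : L := MkLin _ linop0.
Definition lone : L := MkLin _ linop_id.
Definition ladd (P Q : L) : L := MkLin _ (linop_add (lfP P) (lfP Q)).
Definition lscale (c : R) (P : L) : L := MkLin _ (linop_scale c (lfP P)).
Definition lopp (P : L) : L := lscale (-1) P.
Definition lmul (P Q : L) : L := MkLin _ (linop_comp (lfP P) (lfP Q)).

Lemma laddA : associative ladd.
Proof. by move=> P Q W; apply: linE => f a /=; rewrite /opadd addrA. Qed.
Lemma laddC : commutative ladd.
Proof. by move=> P Q; apply: linE => f a /=; rewrite /opadd addrC. Qed.
Lemma ladd0 : left_id lzero ladd.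
Proof. by move=> P; apply: linE => f a /=; rewrite /opadd /opzero add0r. Qed.
Lemma laddN : left_inverse lzero lopp ladd.
Proof. by move=> P; apply: linE => f a /=; rewrite /opadd /opscale /opzero scaleN1r addNr. Qed.
Lemma lmulA : associative lmul.
Proof. by move=> P Q W; apply: linE. Qed.
Lemma lmul1 : left_id lone lmul.
Proof. by move=> P; apply: linE. Qed.
Lemma lmulr1 : right_id lone lmul.
Proof. by move=> P; apply: linE. Qed.
Lemma lmulDl : left_distributive lmul ladd.
Proof. by move=> P Q W; apply: linE. Qed.
Lemma lmulDr : right_distributive lmul ladd.
Proof. by move=> P Q W; apply: linE => f a /=; rewrite /opcomp /opadd linD. Qed.

End LinRing.

HB.instance Definition _ (R : realFieldType) (n : nat) (V : lmodType R) := GRing.isZmodule.Build (Lin R n V)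
  (@laddA R n V) (@laddC R n V) (@ladd0 R n V) (@laddN R n V).
HB.instance Definition _ (R : realFieldType) (n : nat) (V : lmodType R) := GRing.Zmodule_isPzRing.Build (Lin R n V)
  (@lmulA R n V) (@lmul1 R n V) (@lmulr1 R n V) (@lmulDl R n V) (@lmulDr R n V).

Section LinMod.
Variables (R : realFieldType) (n : nat) (V : lmodType R).
Local Notation L := (Lin R n V).
Lemma lscaleA a b (v : L) : lscale a (lscale b v) = lscale (a * b) v.
Proof. by apply: linE => f x /=; rewrite /opscale scalerA. Qed.
Lemma lscale1 : left_id 1 (@lscale R n V).
Proof. by move=> v; apply: linE => f x /=; rewrite /opscale scale1r. Qed.
Lemma lscaleDr : right_distributive (@lscale R n V) +%R.
Proof. by move=> c u v; apply: linE => f x /=; rewrite /opscale /opadd scalerDr. Qed.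
Lemma lscaleDl (v : L) : {morph (fun a : R => lscale a v) : a b / a + b}.
Proof. by move=> a b; apply: linE => f x /=; rewrite /opscale /opadd scalerDl. Qed.
End LinMod.

HB.instance Definition _ (R : realFieldType) (n : nat) (V : lmodType R) := GRing.Zmodule_isLmodule.Build R (Lin R n V)
  (@lscaleA R n V) (@lscale1 R n V) (@lscaleDr R n V) (@lscaleDl R n V).

Section Test.
Variables (R : realFieldType) (n : nat) (V : lmodType R).
Lemma lfD (P Q : Lin R n V) : lf (P + Q) = opadd (lf P) (lf Q). Proof. by []. Qed.
Lemma lfM (P Q : Lin R n V) : lf (P * Q) = opcomp (lf P) (lf Q). Proof. by []. Qed.
Lemma lfZ c (P : Lin R n V) : lf (c *: P) = opscale c (lf P). Proof. by []. Qed.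
Lemma lfN (P : Lin R n V) : lf (- P) = opscale (-1) (lf P). Proof. by []. Qed.
Lemma lf1 : lf (1 : Lin R n V) = @opid R n V. Proof. by []. Qed.
Lemma lf0 : lf (0 : Lin R n V) = @opzero R n V. Proof. by []. Qed.
Lemma scalerAl' c (P Q : Lin R n V) : c *: (P * Q) = (c *: P) * Q. Proof. by apply: linE. Qed.
Lemma scalerAr' c (P Q : Lin R n V) : c *: (P * Q) = P * (c *: Q).
Proof. by apply: linE => f a /=; rewrite /opscale /opcomp linZ. Qed.
End Test.

Section Ops2.
Variables (R : realFieldType) (n : nat) (V : lmodType R).
Variables (e : 'I_n -> V -> V) (mu : 'I_n -> R).
Hypothesis He : forall i (c : R) (u v : V), e i (c *: u + v) = c *: e i u + e i v.
Hypothesis Hc : forall i j (v : V), e i (e j v) + e j (e i v) = - (2 * (i == j)%:R) *: v.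
Local Notation L := (Lin R n V).

Lemma e0 i : e i 0 = 0.
Proof.
have := He i 1 0 0; rewrite !scale1r addr0 => h.
by apply: (@addrI _ (e i 0)); rewrite addr0 -h.
Qed.
Lemma eZ i c u : e i (c *: u) = c *: e i u.
Proof. by have := He i c u 0; rewrite addr0 e0 addr0. Qed.
Lemma eD i u v : e i (u + v) = e i u + e i v.
Proof. by have := He i 1 u v; rewrite !scale1r. Qed.

Lemma incmE i (a : mon n) j : incm i a j = (a j + (j == i))%N.
Proof. by rewrite ffunE. Qed.
Lemma decmE i (a : mon n) j : decm i a j = (a j - (j == i))%N.
Proof. by rewrite ffunE. Qed.
Lemma decmK i (a : mon n) : decm i (incm i a) = a.
Proof. by apply/ffunP => j; rewrite !ffunE addnK. Qed.
Lemma incmK i (a : mon n) : (0 < a i)%N -> incm i (decm i a) = a.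
Proof.
move=> h; apply/ffunP => j; rewrite !ffunE.
case: eqP => [->|_]; last by rewrite subn0 addn0.
by rewrite subnK.
Qed.
Lemma incmC i j (a : mon n) : incm i (incm j a) = incm j (incm i a).
Proof. by apply/ffunP => p; rewrite !ffunE -!addnA (addnC (p == j)). Qed.
Lemma decm_incm i j (a : mon n) : i != j -> decm i (incm j a) = incm j (decm i a).
Proof.
move=> ij; apply/ffunP => p; rewrite !ffunE.
case: (eqVneq p i) => [->|_]; last by rewrite !subn0.
by rewrite (negbTE ij) !addn0.
Qed.

Definition sgn (A : {set 'I_n}) (a : mon n) : R := \prod_(p in A) (-1) ^+ (a p).
Definition sig (A : {set 'I_n}) (i : 'I_n) : R := if i \in A then -1 else 1.

Lemma sig2 A i : sig A i * sig A i = 1.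
Proof. by rewrite /sig; case: (i \in A); rewrite ?mulN1r ?opprK ?mulr1. Qed.

Lemma sgn_incm A i (a : mon n) : sgn A (incm i a) = sig A i * sgn A a.
Proof.
rewrite /sgn /sig; case: ifP => iA.
  rewrite (bigD1 i iA) [in RHS](bigD1 i iA) /= incmE eqxx addn1 exprS mulrA.
  congr (_ * _); apply: eq_bigr => p /andP [_ pi]; by rewrite incmE (negbTE pi) addn0.
rewrite mul1r; apply: eq_bigr => p pA; rewrite incmE.
by case: eqP => [pi|]; [rewrite pi iA in pA | rewrite addn0].
Qed.

Lemma sgn_decm A i (a : mon n) : (0 < a i)%N -> sgn A (decm i a) = sig A i * sgn A a.
Proof.
move=> h; rewrite -{2}(incmK h) sgn_incm mulrA sig2 mul1r //.
Qed.

Lemma sgn2 A (a : mon n) : sgn A a * sgn A a = 1.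
Proof.
rewrite /sgn -big_split /=; apply: big1 => p _.
by rewrite -expr2 sqrr_sign.
Qed.

Lemma linop_x i : linop (@xop R n V i).
Proof.
move=> c f g; apply: funext => a; rewrite /xop.
by case: ifP => _ //; rewrite scaler0 addr0.
Qed.
Lemma linop_T i : linop (@Top R n V mu i).
Proof.
by move=> c f g; apply: funext => a; rewrite /Top scalerDr !scalerA mulrC.
Qed.
Lemma linop_e i : linop (@eop R n V e i).
Proof. by move=> c f g; apply: funext => a; rewrite /eop He. Qed.
Lemma linop_sg A : linop (fun (f : PV n V) a => sgn A a *: f a).
Proof.
by move=> c f g; apply: funext => a; rewrite scalerDr !scalerA mulrC.
Qed.

Definition Xl i : L := MkLin _ (linop_x i).
Definition Tl i : L := MkLin _ (linop_T i).
Definition El i : L := MkLin _ (linop_e i).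
Definition Sg A : L := MkLin _ (linop_sg A).
Definition rl i : L := Sg [set i].

Definition coefT i (m : nat) : R := m.+1%:R + mu i * (1 - (-1) ^+ m.+1).

Lemma XlE i f a : lf (Xl i) f a = if (0 < a i)%N then f (decm i a) else 0.
Proof. by []. Qed.
Lemma TlE i f a : lf (Tl i) f a = coefT i (a i) *: f (incm i a).
Proof. by []. Qed.
Lemma ElE i f a : lf (El i) f a = e i (f a).
Proof. by []. Qed.
Lemma SgE A f a : lf (Sg A) f a = sgn A a *: f a.
Proof. by []. Qed.
Lemma lfME (P Q : L) f a : lf (P * Q) f a = lf P (lf Q f) a.
Proof. by []. Qed.
Lemma lfDE (P Q : L) f a : lf (P + Q) f a = lf P f a + lf Q f a.
Proof. by []. Qed.
Lemma lfZE c (P : L) f a : lf (c *: P) f a = c *: lf P f a.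
Proof. by []. Qed.
Lemma lfNE (P : L) f a : lf (- P) f a = - lf P f a.
Proof. by rewrite /= /opscale scaleN1r. Qed.
Lemma lf1E f a : lf (1 : L) f a = f a.
Proof. by []. Qed.

Lemma EE i j : El i * El j + El j * El i = (- (2 * (i == j)%:R)) *: (1 : L).
Proof. by apply: linE => f a; rewrite lfDE !lfME !ElE Hc. Qed.

Ltac simp := rewrite ?(lfME, lfDE, lfZE, lfNE, lf1E) /= /xop /Top /eop /opcomp /=.

Lemma EX i j : El i * Xl j = Xl j * El i.
Proof. by apply: linE => f a; simp; case: ifP => //; rewrite e0. Qed.
Lemma ET i j : El i * Tl j = Tl j * El i.
Proof. by apply: linE => f a; simp; rewrite eZ. Qed.
Lemma ESg i A : El i * Sg A = Sg A * El i.
Proof. by apply: linE => f a; simp; rewrite eZ. Qed.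

Lemma XT i j : i != j -> Xl i * Tl j = Tl j * Xl i.
Proof.
move=> ij; apply: linE => f a; simp; rewrite incmE (negbTE ij) addn0.
case: ifP => _; last by rewrite scaler0.
by rewrite decmE eq_sym (negbTE ij) subn0 decm_incm.
Qed.

Lemma decmC i j (a : mon n) : decm i (decm j a) = decm j (decm i a).
Proof. by apply/ffunP => p; rewrite !ffunE -!subnDA addnC. Qed.

Lemma XX i j : Xl i * Xl j = Xl j * Xl i.
Proof.
have [->|ij] := eqVneq i j; first by [].
apply: linE => f a; simp; rewrite !decmE (negbTE ij) eq_sym (negbTE ij) !subn0.
by case: (0 < a i)%N; case: (0 < a j)%N => //; rewrite decmC.
Qed.

Lemma TT i j : Tl i * Tl j = Tl j * Tl i.
Proof.
have [->|ij] := eqVneq i j; first by [].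
apply: linE => f a; simp; rewrite !incmE (negbTE ij) eq_sym (negbTE ij) !addn0.
by rewrite !scalerA mulrC incmC.
Qed.

Lemma sgn1 i (a : mon n) : sgn [set i] a = (-1) ^+ (a i).
Proof. by rewrite /sgn big_set1. Qed.

Lemma X3 i : Tl i * Xl i - Xl i * Tl i = 1 + (2 * mu i) *: rl i.
Proof.
apply: linE => f a; rewrite lfDE lfNE; simp; rewrite sgn1 incmE eqxx addn1 /= decmK.
case Ha: (a i) => [|m] /=.
  rewrite subr0 scalerA -{2}(scale1r (f a)) -scalerDl; congr (_ *: _).
  by rewrite expr0 expr1; ring.
rewrite decmE eqxx subn1 /= incmK ?Ha //.
rewrite scalerA -scalerBl -{2}(scale1r (f a)) -scalerDl; congr (_ *: _).
rewrite !exprS; ring.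
Qed.

Lemma SgX A i : Sg A * Xl i = sig A i *: (Xl i * Sg A).
Proof.
apply: linE => f a; simp.
case h: (0 < a i)%N; last by rewrite !scaler0.
by rewrite sgn_decm // !scalerA mulrA sig2 mul1r.
Qed.

Lemma SgT A i : Sg A * Tl i = sig A i *: (Tl i * Sg A).
Proof.
apply: linE => f a; simp; rewrite sgn_incm !scalerA; congr (_ *: _).
by rewrite (mulrCA (sig A i)) [sig A i * (sig A i * _)]mulrA sig2 mul1r mulrC.
Qed.

Lemma SgC A B : Sg A * Sg B = Sg B * Sg A.
Proof. by apply: linE => f a; simp; rewrite !scalerA mulrC. Qed.

Lemma SgK A : Sg A * Sg A = 1.
Proof. by apply: linE => f a; simp; rewrite scalerA sgn2 scale1r. Qed.

Lemma SgU1 (j : 'I_n) (C : {set 'I_n}) : j \notin C -> Sg (j |: C) = Sg C * rl j.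
Proof.
move=> jC; apply: linE => f a; simp; rewrite sgn1 scalerA /sgn big_setU1 //= mulrC.
by congr (_ *: _).
Qed.

Lemma Sg0 : Sg set0 = 1.
Proof. by apply: linE => f a; simp; rewrite /sgn big_set0 scale1r. Qed.

Lemma rop_rl i : rop i = lf (rl i).
Proof. by apply: funext => f; apply: funext => a; simp; rewrite sgn1. Qed.

Lemma bigR (A : {set 'I_n}) : \big[@opcomp R n V/@opid R n V]_(i in A) @rop R n V i = lf (Sg A).
Proof.
rewrite /Sg /=; apply: funext => f; apply: funext => a.
rewrite /sgn /index_enum; elim: (Finite.enum _) => [|i s IH] /= in f *.
  by rewrite !big_nil scale1r.
rewrite !big_cons; case: (i \in A) => //.
have -> : forall B : Op n V, opcomp (rop i) B f a = (-1) ^+ a i *: B f a by [].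
by rewrite IH scalerA.
Qed.
End Ops2.

Lemma mv_end (M : zmodType) (A B t S : M) : A = S + t -> A + B = (S + B) + t.
Proof. by move=> ->; rewrite addrAC. Qed.

Lemma cancel_negL (M : zmodType) (S S' t : M) : S = S' + t -> S' = 0 -> S + - t = 0.
Proof. by move=> -> ->; rewrite add0r subrr. Qed.
Lemma cancel_posL (M : zmodType) (S S' t : M) : S = S' + - t -> S' = 0 -> S + t = 0.
Proof. by move=> -> ->; rewrite add0r addNr. Qed.
Lemma rem_baseL (M : zmodType) (t : M) : t = 0 + t.
Proof. by rewrite add0r. Qed.

Ltac eqc a b := constr_eq_nounivs a b.

Ltac prove_rem t := lazymatch goal with
 | |- ?A + ?B = _ => first [ eqc B t; reflexivity | eapply mv_end; prove_rem t ]
 | |- ?B = _ => eqc B t; eapply rem_baseL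
end.

Ltac prove_remN t := lazymatch goal with
 | |- ?A + (@GRing.opp _ ?B) = _ => first [ eqc B t; reflexivity | eapply mv_end; prove_remN t ]
 | |- ?A + ?B = _ => eapply mv_end; prove_remN t
 | |- (@GRing.opp _ ?B) = _ => eqc B t; eapply rem_baseL
end.

Ltac zcancel :=
 lazymatch goal with
 | |- 0 = 0 => reflexivity
 | |- ?S + (@GRing.opp _ ?t) = 0 => eapply cancel_negL; [ prove_rem t | zcancel ]
 | |- ?S + ?t = 0 => eapply cancel_posL; [ prove_remN t | zcancel ]
 end.

Ltac zsolve := apply/eqP; rewrite -subr_eq0; apply/eqP;
  rewrite ?(opprD, opprK, addrA); zcancel.


Section Main.
Variables (R : realFieldType) (n : nat) (V : lmodType R).
Variables (e : 'I_n -> V -> V) (mu : 'I_n -> R).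
Hypothesis He : forall i (c : R) (u v : V), e i (c *: u + v) = c *: e i u + e i v.
Hypothesis Hc : forall i j (v : V), e i (e j v) + e j (e i v) = - (2 * (i == j)%:R) *: v.
Local Notation L := (Lin R n V).
Local Notation Xl := (@Xl R n V).
Local Notation Tl := (@Tl R n V mu).
Local Notation El := (@El R n V e He).
Local Notation Sg := (@Sg R n V).
Local Notation rl := (@rl R n V).
Local Notation sig := (@sig R n).

Definition N i l : L := El i * El l * (Xl i * Tl l).
Definition XL (A : {set 'I_n}) : L := \sum_(i in A) El i * Xl i.
Definition DL (A : {set 'I_n}) : L := \sum_(i in A) El i * Tl i.
Definition Sx (A : {set 'I_n}) : L := 2^-1 *: (XL A * DL A - DL A * XL A - 1).
Definition Gam (A : {set 'I_n}) : L := Sx A * Sg A.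
Definition Lam j (C : {set 'I_n}) : L := \sum_(c in C) (N c j + N j c).
Definition hh : L := 2^-1 *: (1 : L).

Ltac eqc a b ::= first [ constr_eq_nounivs a b |
  with_strategy opaque [lmul ladd lscale lzero lone lopp N XL DL Lam Sx hh Gam] unify a b ].

Lemma lfD' (x y : L) : lf (x + y) = opadd (lf x) (lf y). Proof. by []. Qed.
Lemma lf0' : lf (0 : L) = @opzero R n V. Proof. by []. Qed.

Lemma XAE A : XA e A = lf (XL A).
Proof. by rewrite /XL (big_morph (@lf R n V) lfD' lf0'). Qed.
Lemma DAE A : DA e mu A = lf (DL A).
Proof. by rewrite /DL (big_morph (@lf R n V) lfD' lf0'). Qed.

Lemma GammaE A : GammaA e mu A = lf (Gam A).
Proof. by rewrite /GammaA bigR /SA XAE DAE. Qed.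


Lemma scalerAl'' c (x y : L) : (c *: x) * y = c *: (x * y). Proof. by rewrite scalerAl'. Qed.
Lemma scalerAr'' c (x y : L) : x * (c *: y) = c *: (x * y). Proof. by rewrite scalerAr'. Qed.

Lemma commZ (x y : L) c : GRing.comm x y -> GRing.comm x (c *: y).
Proof. by move=> h; rewrite /GRing.comm scalerAr'' scalerAl'' h. Qed.

Lemma two_neq0 : (2 : R) != 0.
Proof. by rewrite pnatr_eq0. Qed.

Lemma EEii i : El i * El i = -1.
Proof.
have h := EE He Hc i i; rewrite eqxx mulr1 in h.
apply: (scalerI two_neq0); rewrite scaler_nat mulr2n h.
by rewrite scalerN scaleNr.
Qed.

Lemma EEij i j : i != j -> El j * El i = - (El i * El j).
Proof.
move=> ij; have h := EE He Hc i j; rewrite (negbTE ij) mulr0 oppr0 scale0r in h.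
by apply/eqP; rewrite -addr_eq0 addrC h.
Qed.

Lemma cEX i j : GRing.comm (El i) (Xl j). Proof. exact: EX. Qed.
Lemma cET i j : GRing.comm (El i) (Tl j). Proof. exact: ET. Qed.
Lemma cESg i A : GRing.comm (El i) (Sg A). Proof. exact: ESg. Qed.

Lemma acommM (x z y : L) : x * y = - (y * x) -> z * y = - (y * z) -> GRing.comm (x * z) y.
Proof.
move=> h1 h2; rewrite /GRing.comm -mulrA h2 mulrN [x * (y * z)]mulrA h1 mulNr opprK.
by rewrite mulrA.
Qed.


Lemma scale2 (x : L) : 2 *: x = x + x.
Proof. by rewrite scaler_nat mulr2n. Qed.

Lemma swapE i j (P Q : L) : GRing.comm P (El j) ->
  El i * P * (El j * Q) = El i * El j * (P * Q).
Proof. by move=> h; rewrite -mulrA [P * (_ * _)]mulrA h !mulrA. Qed.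

Lemma XL_U1 j (C : {set 'I_n}) : j \notin C -> XL (j |: C) = El j * Xl j + XL C.
Proof. by move=> h; rewrite /XL big_setU1. Qed.
Lemma DL_U1 j (C : {set 'I_n}) : j \notin C -> DL (j |: C) = El j * Tl j + DL C.
Proof. by move=> h; rewrite /DL big_setU1. Qed.

Lemma Sx0 : Sx set0 = - hh.
Proof. by rewrite /Sx /XL /DL !big_set0 mul0r subrr sub0r scalerN. Qed.

Lemma comm_jj j : El j * Xl j * (El j * Tl j) - El j * Tl j * (El j * Xl j)
  = 1 + (2 * mu j) *: rl j.
Proof.
rewrite !swapE; try exact/commr_sym/cEX; try exact/commr_sym/cET.
by rewrite EEii !mulN1r opprK addrC X3.
Qed.

Lemma comm_il i l : i != l ->
  El i * Xl i * (El l * Tl l) - El l * Tl l * (El i * Xl i) = 2 *: N i l.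
Proof.
move=> il; rewrite !swapE; try exact/commr_sym/cEX; try exact/commr_sym/cET.
by rewrite (EEij il) -(@XT _ _ V mu _ _ il) mulNr opprK scale2.
Qed.


Lemma comm_split (x X d D : L) :
  (x + X) * (d + D) - (d + D) * (x + X) =
  (X * D - D * X) + (x * d - d * x) + ((x * D - D * x) + (X * d - d * X)).
Proof. rewrite !mulrDl !mulrDr; zsolve. Qed.

Lemma SxU1 j (C : {set 'I_n}) : j \notin C -> Sx (j |: C) = Sx C + hh + mu j *: rl j + Lam j C.
Proof.
move=> jC; rewrite /Sx XL_U1 // DL_U1 // comm_split comm_jj.
have h1 : El j * Xl j * DL C - DL C * (El j * Xl j) = 2 *: \sum_(c in C) N j c.
  rewrite scaler_sumr /DL mulr_sumr mulr_suml -sumrB; apply: eq_bigr => c cC.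
  by apply: comm_il; apply: contraNneq jC => ->.
have h2 : XL C * (El j * Tl j) - El j * Tl j * XL C = 2 *: \sum_(c in C) N c j.
  rewrite scaler_sumr /XL mulr_sumr mulr_suml -sumrB; apply: eq_bigr => c cC.
  by apply: comm_il; apply: contraNneq jC => <-.
rewrite h1 h2.
have E : mu j *: rl j + Lam j C = 2^-1 *: (2 *: (mu j *: rl j + Lam j C)).
  by rewrite scalerA mulVf ?two_neq0 // scale1r.
rewrite -[RHS]addrA E /hh -!scalerDr; congr (_ *: _).
have -> : Lam j C = \sum_(c in C) N c j + \sum_(c in C) N j c by rewrite /Lam big_split.
rewrite !scalerDr scalerA; zsolve.
Qed.


Lemma SgN P i l : Sg P * N i l = (sig P i * sig P l) *: (N i l * Sg P).
Proof.
rewrite /N.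
have h1 : Sg P * (El i * El l) = El i * El l * Sg P.
  by rewrite mulrA -(cESg i P) -mulrA -(cESg l P) mulrA.
have h2 : Sg P * (Xl i * Tl l) = (sig P i * sig P l) *: (Xl i * Tl l * Sg P).
  by rewrite mulrA SgX scalerAl'' -mulrA SgT scalerAr'' scalerA mulrA.
by rewrite mulrA h1 -mulrA h2 scalerAr'' mulrA.
Qed.

Lemma sig_out (P : {set 'I_n}) i : i \notin P -> sig P i = 1.
Proof. by rewrite /sig => /negbTE ->. Qed.
Lemma sig_in (P : {set 'I_n}) i : i \in P -> sig P i = -1.
Proof. by rewrite /sig => ->. Qed.

Lemma comm_SgN P i l : sig P i * sig P l = 1 -> GRing.comm (Sg P) (N i l).
Proof. by move=> h; rewrite /GRing.comm SgN h scale1r. Qed.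
Lemma acomm_SgN P i l : sig P i * sig P l = -1 -> Sg P * N i l = - (N i l * Sg P).
Proof. by move=> h; rewrite SgN h scaleN1r. Qed.

Lemma commr_hh (Y : L) : GRing.comm Y hh.
Proof. exact/commZ/commr1. Qed.

Lemma comm_Sx (Y : L) (C : {set 'I_n}) :
  (forall c, c \in C -> GRing.comm Y (rl c)) ->
  (forall c d, c \in C -> d \in C -> c != d -> GRing.comm Y (N c d)) ->
  GRing.comm Y (Sx C).
Proof.
move Hm: #|C| => m; elim: m C Hm => [|m IH] C Hm hr hN.
  move/eqP: Hm; rewrite cards_eq0 => /eqP ->; rewrite Sx0.
  exact/commrN/commr_hh.
have [j jC] : exists j, j \in C.
  by apply/set0Pn; rewrite -card_gt0 Hm.
have jC' : j \notin C :\ j by rewrite setD11.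
have sub : forall c, c \in C :\ j -> c \in C by move=> c; rewrite in_setD1 => /andP [].
rewrite -(setD1K jC) SxU1 //.
apply: commrD; first apply: commrD; first apply: commrD.
- apply: IH; last by move=> c d /sub cC /sub dC; exact: hN.
  + by move: Hm; rewrite (cardsD1 j C) jC add1n => -[].
  + by move=> c /sub; exact: hr.
- exact: commr_hh.
- exact/commZ/hr.
- apply: commr_sum => c cC'; apply: commrD; apply: hN => //; try exact: sub;
  by move: cC'; rewrite in_setD1 => /andP [] // ; rewrite eq_sym.
Qed.


Lemma XT' i j : i != j -> Xl i * Tl j = Tl j * Xl i.
Proof. exact: (@XT _ _ V mu i j). Qed.

Lemma cEEp i l p : i != p -> l != p -> GRing.comm (El i * El l) (El p).
Proof.
move=> ip lp; apply: acommM; apply: EEij; by rewrite eq_sym.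
Qed.
Lemma cEE2 i l p q : i != p -> i != q -> l != p -> l != q ->
  GRing.comm (El i * El l) (El p * El q).
Proof. by move=> *; apply: commrM; apply: cEEp. Qed.
Lemma cXT_E i l p : GRing.comm (Xl i * Tl l) (El p).
Proof. by apply/commr_sym/commrM; [exact: cEX | exact: cET]. Qed.
Lemma cXT_EE i l p q : GRing.comm (Xl i * Tl l) (El p * El q).
Proof. by apply: commrM; apply: cXT_E. Qed.
Lemma cXTXT i l p q : i != q -> l != p -> GRing.comm (Xl i * Tl l) (Xl p * Tl q).
Proof.
move=> iq lp; apply: commrM.
  apply/commr_sym/commrM; first exact: XX.
  by apply: XT'; rewrite eq_sym.
apply/commr_sym/commrM; last exact: TT.
by rewrite /GRing.comm (XT' iq).
Qed.

Lemma commNN i l p q : i != p -> i != q -> l != p -> l != q ->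
  GRing.comm (N i l) (N p q).
Proof.
move=> ip iq lp lq; rewrite /N; apply: commrM.
  apply/commr_sym/commrM; first by apply: cEE2; rewrite eq_sym.
  exact/commr_sym/cXT_EE.
apply/commr_sym/commrM; first exact: cXT_EE.
by apply: cXTXT; rewrite eq_sym.
Qed.

Lemma comm_rlN c p q : c != p -> c != q -> GRing.comm (N p q) (rl c).
Proof.
move=> cp cq; apply/commr_sym/comm_SgN.
by rewrite !sig_out ?mulr1 // in_set1 eq_sym.
Qed.

Definition O i l : L := Xl i * Tl l - Xl l * Tl i.
Definition W j : L := 1 + (2 * mu j) *: rl j.

Lemma NO i l : i != l -> N i l + N l i = El i * El l * O i l.
Proof. by move=> il; rewrite /N /O (EEij il) mulNr mulrBr. Qed.

Lemma G1 j a b : a != b -> j != b ->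
  (Xl j * Tl b) * (Xl a * Tl j) = (Xl a * Tl b) * (Xl j * Tl j).
Proof.
move=> ab jb.
rewrite mulrA -[Xl j * Tl b * Xl a]mulrA -(XT' ab).
have h : GRing.comm (Xl j) (Xl a * Tl b) by apply: commrM; [exact: XX | exact: XT'].
by rewrite h -mulrA.
Qed.

Lemma G2 j a b : j != b ->
  (Xl a * Tl j) * (Xl j * Tl b) = (Xl a * Tl b) * (Tl j * Xl j).
Proof.
move=> jb.
have h : GRing.comm (Tl b) (Tl j * Xl j).
  by apply: commrM; [exact: TT | rewrite /GRing.comm (XT' jb)].
by rewrite -mulrA [Tl j * (_ * _)]mulrA -h !mulrA.
Qed.

Lemma OO c j k : c != j -> j != k -> c != k ->
  O j k * O c j - O c j * O j k = - (O c k * W j).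
Proof.
move=> cj jk ck; rewrite /W -X3 /O !mulrBl !mulrBr.
have jc : j != c by rewrite eq_sym.
have kj : k != j by rewrite eq_sym.
have kc : k != c by rewrite eq_sym.
have e1 := cXTXT jc kj.
have e2 := cXTXT kj jc.
rewrite /GRing.comm in e1 e2.
rewrite e1 e2 (G1 ck jk) (G2 c jk) (G2 k jc) (G1 kc jc).
rewrite ?mulrBl ?mulrBr; zsolve.
Qed.

Lemma swapM (x P y Q : L) : GRing.comm P y -> x * P * (y * Q) = x * y * (P * Q).
Proof. by move=> h; rewrite -mulrA [P * (_ * _)]mulrA h !mulrA. Qed.

Lemma cOE i l p : GRing.comm (O i l) (El p).
Proof. by apply/commr_sym/commrB; apply/commr_sym/cXT_E. Qed.

Lemma core_c c j k : c != j -> j != k -> c != k ->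
  (N c j + N j c) * (N j k + N k j) + (N j k + N k j) * (N c j + N j c)
  = - ((N c k + N k c) * W j).
Proof.
move=> cj jk ck; have jc : j != c by rewrite eq_sym.
rewrite !NO //.
have s1 : GRing.comm (O c j) (El j * El k) by apply: commrM; apply: cOE.
have s2 : GRing.comm (O j k) (El c * El j) by apply: commrM; apply: cOE.
rewrite (swapM _ _ s1) (swapM _ _ s2).
have f1 : El c * El j * (El j * El k) = - (El c * El k).
  by rewrite -mulrA [El j * (El j * El k)]mulrA EEii mulN1r mulrN.
have f2 : El j * El k * (El c * El j) = El c * El k.
  rewrite (EEij jc) mulrN -mulrA [El k * (El j * El c)]mulrA (EEij jk) mulNr.
  rewrite mulrN opprK !mulrA EEii mulN1r mulNr (EEij ck) opprK //.
rewrite f1 f2 mulNr addrC -mulrBr OO // mulrN mulrA //.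
Qed.


Lemma Lam_core j k (C : {set 'I_n}) : j != k -> j \notin C -> k \notin C ->
  Lam j C * (N j k + N k j) + (N j k + N k j) * Lam j C = - (Lam k C * W j).
Proof.
move=> jk jC kC; rewrite /Lam mulr_suml mulr_sumr -big_split /= mulr_suml -sumrN.
apply: eq_bigr => c cC; apply: core_c => //.
- by apply: contraNneq jC => <-.
- by apply: contraNneq kC => <-.
Qed.

Lemma hhM (x : L) : hh * x = 2^-1 *: x.
Proof. by rewrite /hh scalerAl'' mul1r. Qed.
Lemma Mhh (x : L) : x * hh = 2^-1 *: x.
Proof. by rewrite /hh scalerAr'' mulr1. Qed.
Lemma half_cancel (x : L) : 2 *: (2^-1 *: x) = x.
Proof. by rewrite scalerA mulfV ?two_neq0 // scale1r. Qed.

Lemma S_ident (hh sg a b La Lc K : L) :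
  (forall x, hh * x = 2^-1 *: x) -> (forall x, x * hh = 2^-1 *: x) ->
  a * sg = sg * a -> b * sg = sg * b -> Lc * sg = sg * Lc -> b * a = a * b ->
  a * Lc = - (Lc * a) -> a * La = - (La * a) -> b * La = La * b ->
  Lc * La = - (K + 2 *: (K * a)) - La * Lc ->
  (sg + hh + a + La) * (b + hh + a - Lc) + (b + hh + a + Lc) * (sg + hh + a - La)
  = sg + hh + b + K + 2 *: ((sg + hh + a + La + hh + b + (Lc + K)) * a) + 2 *: (sg * b).
Proof.
move=> hhM Mhh r1 r2 r3 r4 r5 r6 r7 r8.
apply: (scalerI two_neq0).
rewrite !(mulrDl, mulrDr) ?(mulNr, mulrN) ?(hhM, Mhh).
rewrite r1 r2 r3 r4 r5 r6 r7 r8.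
rewrite !(scalerDr, scalerN, opprD, opprK).
rewrite !half_cancel !scale2.
zsolve.
Qed.


Lemma rlC i l : rl i * rl l = rl l * rl i. Proof. exact: SgC. Qed.
Lemma rlK i : rl i * rl i = 1. Proof. exact: SgK. Qed.
Lemma SgrlC A i : Sg A * rl i = rl i * Sg A. Proof. exact: SgC. Qed.

Lemma acZ c (y z : L) : y * z = - (z * y) -> (c *: y) * z = - (z * (c *: y)).
Proof. by move=> h; rewrite scalerAl'' scalerAr'' h scalerN. Qed.
Lemma acD (y z1 z2 : L) : y * z1 = - (z1 * y) -> y * z2 = - (z2 * y) ->
  y * (z1 + z2) = - ((z1 + z2) * y).
Proof. by move=> h1 h2; rewrite mulrDr mulrDl h1 h2 opprD. Qed.
Lemma ac_sum (y : L) (C : {set 'I_n}) (F : 'I_n -> L) :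
  (forall c, c \in C -> y * F c = - (F c * y)) ->
  y * (\sum_(c in C) F c) = - ((\sum_(c in C) F c) * y).
Proof.
move=> h; rewrite mulr_sumr mulr_suml -sumrN; apply: eq_bigr => c cC; exact: h.
Qed.

Lemma rl_acN j l : j != l -> rl j * N j l = - (N j l * rl j).
Proof.
move=> jl; apply: acomm_SgN.
have h1 : sig [set j] j = -1 by apply: sig_in; rewrite in_set1.
have h2 : sig [set j] l = 1 by apply: sig_out; rewrite in_set1 eq_sym.
by rewrite h1 h2 mulr1.
Qed.
Lemma rl_acN' j l : j != l -> rl j * N l j = - (N l j * rl j).
Proof.
move=> jl; apply: acomm_SgN.
have h1 : sig [set j] j = -1 by apply: sig_in; rewrite in_set1.
have h2 : sig [set j] l = 1 by apply: sig_out; rewrite in_set1 eq_sym.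
by rewrite h1 h2 mul1r.
Qed.


Lemma conj3 (S x y z w : L) : S * x = x * S -> S * y = y * S -> S * z = z * S ->
  S * w = - (w * S) -> S * (x + y + z + w) = (x + y + z - w) * S.
Proof. by move=> h1 h2 h3 h4; rewrite !mulrDr !mulrDl mulNr h1 h2 h3 h4. Qed.

Lemma c_rl_sc c i l : GRing.comm (c *: rl i) (rl l).
Proof. exact/commr_sym/commZ/rlC. Qed.

Lemma Gam_ident j k (C : {set 'I_n}) : j != k -> j \notin C -> k \notin C ->
  Gam (j |: C) * Gam (j |: [set k]) + Gam (j |: [set k]) * Gam (j |: C)
  = Gam (k |: C) + (2 * mu j) *: Gam (k |: (j |: C)) + (2 * mu k) *: Gam C.
Proof.
move=> jk jC kC.
have kj : k != j by rewrite eq_sym.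
have kA : k \notin j |: C by rewrite in_setU1 negb_or kj.
have jB : j \notin [set k] by rewrite in_set1.
have cj : forall c, c \in C -> c != j by move=> c cC; apply: contraNneq jC => <-.
have ck : forall c, c \in C -> c != k by move=> c cC; apply: contraNneq kC => <-.
set a := mu j *: rl j; set b := mu k *: rl k.
set La := Lam j C; set K := Lam k C; set Lc := N j k + N k j.
have SA : Sx (j |: C) = Sx C + hh + a + La by rewrite SxU1.
have Sk : Sx [set k] = b.
  rewrite -(setU0 [set k]) SxU1 ?in_set0 // Sx0 /Lam big_set0 addr0.
  by rewrite addNr add0r.
have SB : Sx (j |: [set k]) = b + hh + a + Lc.
  by rewrite SxU1 // Sk /Lam big_set1 (addrC (N k j)).
have SCk : Sx (k |: C) = Sx C + hh + b + K by rewrite SxU1.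
have SD : Sx (k |: (j |: C)) = Sx C + hh + a + La + hh + b + (Lc + K).
  by rewrite SxU1 // SA /Lam big_setU1.
have eSA : Sg (j |: C) = Sg C * rl j by rewrite SgU1.
have eSB : Sg (j |: [set k]) = rl k * rl j by rewrite SgU1.
have eSCk : Sg (k |: C) = Sg C * rl k by rewrite SgU1.
have eSD : Sg (k |: (j |: C)) = Sg C * rl j * rl k by rewrite !SgU1.
have jA : j \in j |: C by rewrite setU11.
have jBB : j \in j |: [set k] by rewrite setU11.
have kBB : k \in j |: [set k] by rewrite in_setU1 in_set1 eqxx orbT.
have cB : forall c, c \in C -> c \notin j |: [set k].
  by move=> c cC; rewrite in_setU1 in_set1 negb_or (cj c cC) (ck c cC).
have p1 : Sg (j |: C) * (b + hh + a + Lc) = (b + hh + a - Lc) * Sg (j |: C).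
  have cb : Sg (j |: C) * b = b * Sg (j |: C) by apply/commZ/SgrlC.
  have ch : Sg (j |: C) * hh = hh * Sg (j |: C) by apply: commr_hh.
  have ca : Sg (j |: C) * a = a * Sg (j |: C) by apply/commZ/SgrlC.
  have cL : Sg (j |: C) * Lc = - (Lc * Sg (j |: C)).
    apply: acD; apply: acomm_SgN; rewrite (sig_in jA) (sig_out kA) ?mulr1 ?mul1r //.
  exact: conj3 cb ch ca cL.
have p2 : Sg (j |: [set k]) * (Sx C + hh + a + La) = (Sx C + hh + a - La) * Sg (j |: [set k]).
  have cS : Sg (j |: [set k]) * Sx C = Sx C * Sg (j |: [set k]).
    apply: comm_Sx => [c cC | c d cC dC cd]; first exact: SgrlC.
    by apply: comm_SgN; rewrite !sig_out ?mulr1 //; apply: cB.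
  have ch : Sg (j |: [set k]) * hh = hh * Sg (j |: [set k]) by apply: commr_hh.
  have ca : Sg (j |: [set k]) * a = a * Sg (j |: [set k]) by apply/commZ/SgrlC.
  have cL : Sg (j |: [set k]) * La = - (La * Sg (j |: [set k])).
    apply: ac_sum => c cC; apply: acD; apply: acomm_SgN;
      by rewrite (sig_in jBB) (sig_out (cB c cC)) ?mulr1 ?mul1r.
  exact: conj3 cS ch ca cL.
have p3 : Sg C * rl j * (rl k * rl j) = Sg C * rl k.
  by rewrite (rlC k j) mulrA -(mulrA (Sg C)) rlK mulr1.
have p4 : rl k * rl j * (Sg C * rl j) = Sg C * rl k.
  by rewrite (SgrlC C j) mulrA -(mulrA (rl k)) rlK mulr1 SgrlC.
have mid : forall x p y q : L, x * p * (y * q) = x * (p * y) * q by move=> *; rewrite !mulrA.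
have mid2 : forall x y p q : L, x * (y * p) * q = x * y * (p * q) by move=> *; rewrite !mulrA.
rewrite /Gam SA SB SCk SD.
rewrite (mid (Sx C + hh + a + La)) p1 mid2 (mid (b + hh + a + Lc)) p2 mid2.
rewrite eSA eSB eSCk eSD p3 p4.
have R2 : forall SDx : L, (2 * mu j) *: (SDx * (Sg C * rl j * rl k)) = 2 *: (SDx * a * (Sg C * rl k)).
  have h : Sg C * rl j * rl k = rl j * (Sg C * rl k) by rewrite mulrA SgrlC.
  by move=> SDx; rewrite h mulrA /a scalerAr'' scalerAl'' scalerA.
have R3 : (2 * mu k) *: (Sx C * Sg C) = 2 *: (Sx C * b * (Sg C * rl k)).
  have h3 : Sg C = rl k * (Sg C * rl k) by rewrite SgrlC mulrA rlK mul1r.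
  by rewrite {1}h3 mulrA /b scalerAr'' scalerAl'' scalerA.
rewrite R2 R3 -!scalerAl'' -!mulrDl; congr (_ * _).
have jc : forall c, c \in C -> j != c by move=> c cC; rewrite eq_sym cj.
have kc : forall c, c \in C -> k != c by move=> c cC; rewrite eq_sym ck.
rewrite (scalerAl'' 2 _ a) (scalerAl'' 2 (Sx C) b).
apply: S_ident.
- exact: hhM.
- exact: Mhh.
- apply: comm_Sx => [c cC | c d cC dC cd]; first exact: c_rl_sc.
  by apply: commr_sym; apply: commZ; apply: comm_rlN; rewrite ?jc.
- apply: comm_Sx => [c cC | c d cC dC cd]; first exact: c_rl_sc.
  by apply: commr_sym; apply: commZ; apply: comm_rlN; rewrite ?kc.
- apply: comm_Sx => [c cC | c d cC dC cd]; apply: commr_sym; apply: commrD;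
    apply: commr_sym.
  + by apply: comm_rlN; rewrite ?cj ?ck.
  + by apply: comm_rlN; rewrite ?cj ?ck.
  + by apply: commNN; rewrite ?jc ?kc.
  + by apply: commNN; rewrite ?jc ?kc.
- exact/commZ/c_rl_sc.
- by apply: acZ; apply: acD; [apply: rl_acN | apply: rl_acN'].
- apply: acZ; apply: ac_sum => c cC; apply: acD; [apply: rl_acN' | apply: rl_acN]; exact: jc.
- by apply: commr_sum => c cC; apply: commrD;
    apply: commr_sym; apply: commZ; apply: comm_rlN; rewrite ?kj ?kc.
have h := Lam_core jk jC kC.
have -> : Lc * La = - (K * W j) - La * Lc by rewrite -h addrAC subrr add0r.
by rewrite /W mulrDr mulr1 scalerAr'' /a scalerAr'' scalerA.
Qed.


Definition Gen := fun Q : Op n V => exists B : {set 'I_n}, #|B| = 2%N /\ Q = GammaA e mu B.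

Lemma oa_add (x y : L) : op_alg Gen (lf x) -> op_alg Gen (lf y) -> op_alg Gen (lf (x + y)).
Proof. exact: alg_add. Qed.
Lemma oa_scale c (x : L) : op_alg Gen (lf x) -> op_alg Gen (lf (c *: x)).
Proof. exact: alg_scale. Qed.
Lemma oa_opp (x : L) : op_alg Gen (lf x) -> op_alg Gen (lf (- x)).
Proof. exact: alg_scale. Qed.
Lemma oa_mul (x y : L) : op_alg Gen (lf x) -> op_alg Gen (lf y) -> op_alg Gen (lf (x * y)).
Proof. exact: alg_comp. Qed.
Lemma oa_one : op_alg Gen (lf (1 : L)).
Proof. exact: alg_id. Qed.

Lemma Sx1 j : Sx [set j] = mu j *: rl j.
Proof.
rewrite -(setU0 [set j]) SxU1 ?in_set0 // Sx0 /Lam big_set0 addr0.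
by rewrite addNr add0r.
Qed.

Hypothesis Hmu : forall i, 0 < mu i.

Lemma alg_Gam m (A : {set 'I_n}) : (#|A| <= m)%N -> op_alg Gen (lf (Gam A)).
Proof.
elim: m A => [|m IH] A hA.
  move: hA; rewrite leqn0 cards_eq0 => /eqP ->.
  rewrite /Gam Sx0 Sg0 mulr1; exact/oa_opp/oa_scale/oa_one.
have [/IH //|hm] := boolP (#|A| <= m)%N.
have cA : #|A| = m.+1 by apply/eqP; rewrite eqn_leq hA ltnNge hm.
case: m IH hA hm cA => [|m] IH hA hm cA.
  have [k kA] : exists k, k \in A by apply/set0Pn; rewrite -card_gt0 cA.
  have -> : A = [set k].
    apply/eqP; rewrite eq_sym eqEcard sub1set kA cards1 cA //.
  rewrite /Gam Sx1 /rl scalerAl'' SgK; exact/oa_scale/oa_one.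
case: m IH hA hm cA => [|m] IH hA hm cA.
  by apply: alg_gen; exists A; split => //; rewrite GammaE.
have [k kA] : exists k, k \in A by apply/set0Pn; rewrite -card_gt0 cA.
have cA1 : #|A :\ k| = m.+2 by move: cA; rewrite (cardsD1 k A) kA add1n => -[].
have [j jA1] : exists j, j \in A :\ k by apply/set0Pn; rewrite -card_gt0 cA1.
set C := (A :\ k) :\ j.
have cC : #|C| = m.+1 by move: cA1; rewrite (cardsD1 j (A :\ k)) jA1 add1n => -[].
have jk : j != k by move: jA1; rewrite in_setD1 => /andP [].
have jC : j \notin C by rewrite /C setD11.
have kC : k \notin C by rewrite /C in_setD1 in_setD1 eqxx andbF.
have eA : A = k |: (j |: C) by rewrite /C setD1K // setD1K.
have E := Gam_ident jk jC kC.
have muj : 2 * mu j != 0 by rewrite mulf_neq0 ?two_neq0 // gt_eqF.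
have eD : Gam (k |: (j |: C)) = (2 * mu j)^-1 *:
   (Gam (j |: C) * Gam (j |: [set k]) + Gam (j |: [set k]) * Gam (j |: C)
    - Gam (k |: C) - (2 * mu k) *: Gam C).
  rewrite E.
  have -> : forall x y z : L, x + y + z - x - z = y by move=> x y z; zsolve.
  by rewrite scalerA mulVf // scale1r.
have small : forall X : {set 'I_n}, (#|X| <= m.+2)%N -> op_alg Gen (lf (Gam X)).
  by move=> X hX; apply: IH.
rewrite eA eD; apply: oa_scale; apply: oa_add; first apply: oa_add; first apply: oa_add.
- apply: oa_mul; apply: small.
  + by rewrite cardsU1 jC cC.
  + by rewrite cardsU1 in_set1 jk cards1.
- apply: oa_mul; apply: small.
  + by rewrite cardsU1 in_set1 jk cards1.
  + by rewrite cardsU1 jC cC.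
- by apply: oa_opp; apply: small; rewrite cardsU1 kC cC.
- by apply: oa_opp; apply: oa_scale; apply: small; rewrite cC.
Qed.

End Main.

Unset Implicit Arguments.

Theorem lemma6 (R : realFieldType) (n : nat) (V : lmodType R)
    (e : 'I_n -> V -> V) (mu : 'I_n -> R) :
  (3 <= n)%N ->
  (forall i, 0 < mu i) ->
  (forall i (c : R) (u v : V), e i (c *: u + v) = c *: e i u + e i v) ->
  (forall i j (v : V), e i (e j v) + e j (e i v) = - (2 * (i == j)%:R) *: v) ->
  forall A : {set 'I_n},
    exists P : Op n V,
      op_alg (fun Q => exists B : {set 'I_n}, #|B| = 2%N /\ Q = GammaA e mu B) P /\
      forall f : PV n V, is_poly f -> GammaA e mu A f = P f.
Proof.
move=> _ Hmu He Hc A; exists (GammaA e mu A); split => //.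
rewrite (GammaE mu He).
exact: (alg_Gam He Hc Hmu (leqnn #|A|)).
Qed.
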